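(* Let $w_1=(x_2'-x_2)y_1-(x_1'-x_1)y_2$ and $w_2=(x_2'-x_2)y_1'-(x_1'-x_1)y_2'$, and let $J=\{f\in K[X;Y]: fw_1=0\}\cap\{f\in K[X;Y]: fw_2=0\}$. Then $J$, viewed as a $K[X]$-module, is spanned by $h_1,h_2,h_3,h_4$, where $h_1=y_1y_2y_1'y_2'$, $h_2=y_1y_2\big(y_1'(x_2'-x_2)-y_2'(x_1'-x_1)\big)$, $h_3=y_1'y_2'\big(y_1(x_2'-x_2)-y_2(x_1'-x_1)\big)$, $h_4=\big(y_1'(x_2'-x_2)-y_2'(x_1'-x_1)\big)\big(y_1(x_2'-x_2)-y_2(x_1'-x_1)\big)$.
   Context: $K$ is an infinite field of characteristic different from 2. Let $X=\{x_1,x_2,x_1',x_2'\}$ and $Y=\{y_1,y_2,y_1',y_2'\}$, and let $K[X;Y]\cong K[X]\otimes_K E(Y)$ be the free supercommutative algebra: the $x$'s are even commuting variables, the $y$'s are odd pairwise anticommuting variables, and $E(Y)$ is the Grassmann algebra on the vector space with basis $Y$. $K[X]$ is the polynomial subalgebra in $X$. *)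

(* Defs.v *)
From HB Require Import structures.
From mathcomp Require Import all_boot all_order all_algebra.
From mathcomp Require Import mpoly.
Set Implicit Arguments. Unset Strict Implicit. Unset Printing Implicit Defensive.
Import Order.TTheory GRing.Theory.
Local Open Scope ring_scope.

(* Free supercommutative algebra K[X;Y] = K[X] (x) E(Y) with 4 even variables
   X = (x1, x2, x1', x2') = 'X_0, 'X_1, 'X_2, 'X_3 of {mpoly K[4]} and 4 odd
   variables Y = (y1, y2, y1', y2') indexed by 0,1,2,3.
   An element is a function from subsets A of 'I_4 to K[X]; f A is the
   coefficient of the Grassmann monomial y_A = y_{a1} ... y_{ak}, a1 < ... < ak. *)
Section Super.
Variable K : fieldType.

Definition salg := {ffun {set 'I_4} -> {mpoly K[4]}}.

(* y_A * y_B = (-1)^(#inversions) y_(A u B) when A, B disjoint *)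
Definition ninv (A B : {set 'I_4}) : nat :=
  #|[set p : 'I_4 * 'I_4 | [&& p.1 \in A, p.2 \in B & (p.2 < p.1)%N]]|.

Definition smul (f g : salg) : salg :=
  [ffun S : {set 'I_4} =>
     \sum_(A : {set 'I_4}) \sum_(B : {set 'I_4} | (A :&: B == set0) && (A :|: B == S))
        ((-1) ^+ ninv A B) *: (f A * g B)].

Definition sconst (p : {mpoly K[4]}) : salg :=
  [ffun S : {set 'I_4} => if S == set0 then p else 0].

Definition xv (i : 'I_4) : salg := sconst 'X_i.

Definition yv (j : 'I_4) : salg :=
  [ffun S : {set 'I_4} => if S == [set j] then 1 else 0].

Definition sact (p : {mpoly K[4]}) (f : salg) : salg := smul (sconst p) f.

Definition x1 := xv 0. Definition x2 := xv 1.
Definition x1' := xv 2. Definition x2' := xv 3.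
Definition y1 := yv 0. Definition y2 := yv 1.
Definition y1' := yv 2. Definition y2' := yv 3.

Definition w1 : salg := smul (x2' - x2) y1 - smul (x1' - x1) y2.
Definition w2 : salg := smul (x2' - x2) y1' - smul (x1' - x1) y2'.

Definition h1 : salg := smul (smul (smul y1 y2) y1') y2'.
Definition h2 : salg :=
  smul (smul y1 y2) (smul y1' (x2' - x2) - smul y2' (x1' - x1)).
Definition h3 : salg :=
  smul (smul y1' y2') (smul y1 (x2' - x2) - smul y2 (x1' - x1)).
Definition h4 : salg :=
  smul (smul y1' (x2' - x2) - smul y2' (x1' - x1))
       (smul y1 (x2' - x2) - smul y2 (x1' - x1)).

Definition inJ (f : salg) : Prop := smul f w1 = 0 /\ smul f w2 = 0.

End Super.

(* Main.v *)
Require Import Defs.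
From HB Require Import structures.
From mathcomp Require Import all_boot all_order all_algebra.
From mathcomp Require Import mpoly.
From mathcomp Require Import ring.
Import GRing.Theory.
Local Open Scope ring_scope.
Set Implicit Arguments. Unset Strict Implicit.

Section Div.
Variable K : fieldType.
Local Notation P := {mpoly K[4]}.
Definition sig4 : 4.-tuple P := [tuple 'X_0; 'X_1; 'X_2; 'X_1].
Definition da : P := 'X_3 - 'X_1.
Definition db : P := 'X_0 - 'X_2.
Definition sg (q : P) := comp_mpoly sig4 q.
Definition dvA (q : P) := exists g, q = sg q + da * g.
Lemma dvA_mon m : dvA 'X_[m].
Proof.
rewrite /dvA /sg comp_mpolyX mpolyXE_id.
rewrite !big_ord_recl !big_ord0 /= !mulr1.
set k0 := m _. set k1 := m _. set k2 := m _. set k3 := m _.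
have -> : tnth sig4 (lift ord0 (lift ord0 (lift ord0 ord0))) = 'X_(lift ord0 ord0) by [].
have -> : tnth sig4 (lift ord0 (lift ord0 ord0)) = 'X_(lift ord0 (lift ord0 ord0)) by [].
have -> : tnth sig4 (lift ord0 ord0) = 'X_(lift ord0 ord0) by [].
have -> : tnth sig4 ord0 = 'X_ord0 by [].
have -> : da = 'X_(lift ord0 (lift ord0 (lift ord0 ord0))) - 'X_(lift ord0 ord0) by [].
set x0 := 'X_ord0. set x1 := 'X_(lift _ _). set x2 := 'X_(lift _ _). set x3 := 'X_(lift _ _).
exists (x0 ^+ k0 * x1 ^+ k1 * x2 ^+ k2 * \sum_(i < k3) x3 ^+ (k3.-1 - i) * x1 ^+ i).
rewrite (mulrCA (x3 - x1)) -subrXX. ring.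
Qed.

Lemma dvA_add p q : dvA p -> dvA q -> dvA (p + q).
Proof. move=> [g1 E1] [g2 E2]; exists (g1 + g2); rewrite /sg rmorphD /= -/(sg p) -/(sg q). 
rewrite {1}E1 {1}E2. ring. Qed.

Lemma dvA_scale c p : dvA p -> dvA (c *: p).
Proof. move=> [g1 E1]; exists (c *: g1); rewrite /sg comp_mpolyZ -/(sg p).
by rewrite {1}E1 scalerDr scalerAr. Qed.

Lemma dvA_all q : dvA q.
Proof.
rewrite [q]mpolyE; elim: (msupp q) => [|m s IH]; rewrite ?big_nil ?big_cons.
  by exists 0; rewrite /sg raddf0 mulr0 addr0.
by apply: dvA_add => //; apply: dvA_scale; apply: dvA_mon.
Qed.

Lemma sg_da : sg da = 0.
Proof. by rewrite /sg /da rmorphB /= !comp_mpolyXU /= subrr. Qed.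
Lemma sg_db : sg db = db.
Proof. by rewrite /sg /db rmorphB /= !comp_mpolyXU /=. Qed.

Lemma mnm1_eqE n (i j : 'I_n) : (U_(i) == U_(j))%MM = (i == j).
Proof.
apply/eqP/eqP => [|->//] /(congr1 (fun m : 'X_{1..n} => m i)); rewrite !mnm1E eqxx.
by case: eqP.
Qed.

Lemma db_neq0 : db != 0.
Proof.
apply/eqP => /(congr1 (mcoeff U_(0%R : 'I_4))).
rewrite mcoeffB !mcoeffX mcoeff0 !mnm1_eqE eqxx /= subr0 => /eqP.
by rewrite oner_eq0.
Qed.

Lemma da_neq0 : da != 0.
Proof.
apply/eqP => /(congr1 (mcoeff U_(3%R : 'I_4))).
rewrite mcoeffB !mcoeffX mcoeff0 !mnm1_eqE eqxx /= subr0 => /eqP.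
by rewrite oner_eq0.
Qed.

Lemma DIV p q : da * p = db * q -> exists g, p = db * g /\ q = da * g.
Proof.
move=> E.
have := congr1 sg E; rewrite /sg !rmorphM /= -!/(sg _) sg_da sg_db mul0r.
move/esym/eqP; rewrite mulf_eq0 (negbTE db_neq0) /= => /eqP sq0.
case: (dvA_all q) => g Eq; rewrite sq0 add0r in Eq.
exists g; split => //.
apply: (mulfI da_neq0). by rewrite E Eq mulrCA.
Qed.
End Div.
Definition mk (b0 b1 b2 b3 : bool) : {set 'I_4} :=
  [set i : 'I_4 | nth false [:: b0; b1; b2; b3] i].

Ltac sett := apply/setP; case => [[|[|[|[|?]]]] ?]; rewrite !inE //=.

Lemma mkE (S : {set 'I_4}) : S = mk (0 \in S) (1 \in S) (2 \in S) (3 \in S).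
Proof. apply/setP => i; rewrite inE; case: i => [[|[|[|[|k]]]] Hk] //=; by congr (_ \in S); apply: val_inj. Qed.
Lemma set0_mk : set0 = mk false false false false. Proof. sett. Qed.
Lemma set1_mk0 : [set (0 : 'I_4)] = mk true false false false. Proof. sett. Qed.
Lemma set1_mk1 : [set (1 : 'I_4)] = mk false true false false. Proof. sett. Qed.
Lemma set1_mk2 : [set (2 : 'I_4)] = mk false false true false. Proof. sett. Qed.
Lemma set1_mk3 : [set (3 : 'I_4)] = mk false false false true. Proof. sett. Qed.
Lemma setD1_mk0 b0 b1 b2 b3 : mk b0 b1 b2 b3 :\: mk true false false false = mk false b1 b2 b3. Proof. sett. Qed.
Lemma setD1_mk1 b0 b1 b2 b3 : mk b0 b1 b2 b3 :\: mk false true false false = mk b0 false b2 b3. Proof. sett. Qed.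
Lemma setD1_mk2 b0 b1 b2 b3 : mk b0 b1 b2 b3 :\: mk false false true false = mk b0 b1 false b3. Proof. sett. Qed.
Lemma setD1_mk3 b0 b1 b2 b3 : mk b0 b1 b2 b3 :\: mk false false false true = mk b0 b1 b2 false. Proof. sett. Qed.
Lemma mem_mk0 b0 b1 b2 b3 : (0 : 'I_4) \in mk b0 b1 b2 b3 = b0. Proof. by rewrite inE. Qed.
Lemma mem_mk1 b0 b1 b2 b3 : (1 : 'I_4) \in mk b0 b1 b2 b3 = b1. Proof. by rewrite inE. Qed.
Lemma mem_mk2 b0 b1 b2 b3 : (2 : 'I_4) \in mk b0 b1 b2 b3 = b2. Proof. by rewrite inE. Qed.
Lemma mem_mk3 b0 b1 b2 b3 : (3 : 'I_4) \in mk b0 b1 b2 b3 = b3. Proof. by rewrite inE. Qed.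
Lemma mk_eq a0 a1 a2 a3 b0 b1 b2 b3 :
  (mk a0 a1 a2 a3 == mk b0 b1 b2 b3) = [&& a0 == b0, a1 == b1, a2 == b2 & a3 == b3].
Proof.
apply/eqP/idP => [E|/and4P[/eqP-> /eqP-> /eqP-> /eqP->]//].
have := congr1 (fun S : {set 'I_4} => (0:'I_4) \in S) E; have := congr1 (fun S : {set 'I_4} => (1:'I_4) \in S) E.
have := congr1 (fun S : {set 'I_4} => (2:'I_4) \in S) E; have := congr1 (fun S : {set 'I_4} => (3:'I_4) \in S) E.
rewrite /= !mem_mk0 !mem_mk1 !mem_mk2 !mem_mk3 => -> -> -> ->.
by rewrite !eqxx.
Qed.

Lemma ninv_mk a0 a1 a2 a3 b0 b1 b2 b3 :
  ninv (mk a0 a1 a2 a3) (mk b0 b1 b2 b3) =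
  ((a1 && b0) + (a2 && b0) + (a2 && b1) + (a3 && b0) + (a3 && b1) + (a3 && b2))%N.
Proof.
rewrite /ninv -sum1_card big_mkcond /=.
rewrite (eq_bigr (fun p => (fun i j => if (i, j) \in [set p : 'I_4 * 'I_4 | [&& p.1 \in mk a0 a1 a2 a3, p.2 \in mk b0 b1 b2 b3 & (p.2 < p.1)%N]] then 1%N else 0%N) p.1 p.2)); last by case.
rewrite -(pair_bigA _ (fun i j => if (i, j) \in [set p : 'I_4 * 'I_4 | [&& p.1 \in mk a0 a1 a2 a3, p.2 \in mk b0 b1 b2 b3 & (p.2 < p.1)%N]] then 1%N else 0%N)).
rewrite /= !big_ord_recl !big_ord0 !inE /=.
rewrite /bump /=.
case: a0; case: a1; case: a2; case: a3; case: b0; case: b1; case: b2; case: b3. all: reflexivity.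
Qed.
Lemma condE (A S : {set 'I_4}) (j : 'I_4) :
  ((A :&: [set j] == set0) && (A :|: [set j] == S)) = (j \in S) && (A == S :\ j).
Proof.
apply/andP/andP => [[/eqP H1 /eqP <-]|[jS /eqP ->]].
  split; first by rewrite !inE eqxx orbT.
  apply/eqP/setP => i; rewrite !inE.
  case: (eqVneq i j) => [->|] /=; last by rewrite orbF.
  apply/negP => jA. move/setP: H1 => /(_ j). by rewrite !inE jA eqxx.
split; apply/eqP/setP => i; rewrite !inE.
  by case: (eqVneq i j) => [->|]; rewrite /= ?eqxx ?andbF ?andbT.
  case: (eqVneq i j) => [->|] /=; by rewrite ?eqxx /= ?jS ?orbF ?orbT ?andbT.
Qed.

Section S.
Variable K : fieldType.
Local Notation P := {mpoly K[4]}.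
Local Notation salg := (salg K).
Implicit Types (f g : salg) (p : P).

Lemma addfE f g S : (f + g) S = f S + g S. Proof. by rewrite ffunE. Qed.
Lemma subfE f g S : (f - g) S = f S - g S. Proof. by rewrite !ffunE. Qed.
Lemma zerofE S : (0 : salg) S = 0. Proof. by rewrite ffunE. Qed.

Definition pm p f : salg := [ffun S => p * f S].

Lemma smulDr f g1 g2 : smul f (g1 + g2) = smul f g1 + smul f g2.
Proof.
apply/ffunP => S; rewrite addfE !ffunE -big_split /=; apply: eq_bigr => A _.
rewrite -big_split /=; apply: eq_bigr => B _.
by rewrite addfE mulrDr scalerDr.
Qed.
Lemma smulBr f g1 g2 : smul f (g1 - g2) = smul f g1 - smul f g2.
Proof.
apply/ffunP => S; rewrite subfE !ffunE -sumrB /=; apply: eq_bigr => A _.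
rewrite -sumrB /=; apply: eq_bigr => B _.
by rewrite subfE mulrBr scalerBr.
Qed.
Lemma smulDl f1 f2 g : smul (f1 + f2) g = smul f1 g + smul f2 g.
Proof.
apply/ffunP => S; rewrite addfE !ffunE -big_split /=; apply: eq_bigr => A _.
rewrite -big_split /=; apply: eq_bigr => B _.
by rewrite addfE mulrDl scalerDr.
Qed.
Lemma smul0l g : smul 0 g = 0.
Proof.
apply/ffunP => S; rewrite zerofE !ffunE big1 // => A _; rewrite big1 // => B _.
by rewrite zerofE mul0r scaler0.
Qed.
Lemma smul_pmr f p g : smul f (pm p g) = pm p (smul f g).
Proof.
apply/ffunP => S; rewrite !ffunE mulr_sumr; apply: eq_bigr => A _.
rewrite mulr_sumr; apply: eq_bigr => B _.
by rewrite ffunE mulrCA scalerAr.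
Qed.
Lemma smul_pml f p g : smul (pm p f) g = pm p (smul f g).
Proof.
apply/ffunP => S; rewrite !ffunE mulr_sumr; apply: eq_bigr => A _.
rewrite mulr_sumr; apply: eq_bigr => B _.
by rewrite ffunE -mulrA scalerAr.
Qed.
Lemma pmD p f g : pm p (f + g) = pm p f + pm p g.
Proof. by apply/ffunP => S; rewrite !ffunE mulrDr. Qed.
Lemma pm_pm p q f : pm p (pm q f) = pm (p * q) f.
Proof. by apply/ffunP => S; rewrite !ffunE mulrA. Qed.
Lemma pm0 p : pm p 0 = 0.
Proof. by apply/ffunP => S; rewrite !ffunE mulr0. Qed.

Lemma ninv0l B : ninv set0 B = 0%N.
Proof. rewrite /ninv (_ : [set _ | _] = set0) ?cards0 //; apply/setP => x; by rewrite !inE. Qed.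
Lemma ninv0r A : ninv A set0 = 0%N.
Proof. rewrite /ninv (_ : [set _ | _] = set0) ?cards0 //; apply/setP => x; by rewrite !inE andbF. Qed.

Lemma smul_sconstl p g : smul (sconst p) g = pm p g.
Proof.
apply/ffunP => S; rewrite !ffunE (bigD1 set0) //= [X in _ + X]big1 ?addr0; last first.
  by move=> A /negbTE HA; rewrite big1 // => B _; rewrite ffunE HA mul0r scaler0.
rewrite (bigD1 S) /= ?set0I ?set0U ?eqxx // big1 ?addr0.
  by rewrite ffunE eqxx ninv0l expr0 scale1r.
by move=> B /andP[/andP[_ /eqP E]]; rewrite set0U in E; rewrite E eqxx.
Qed.
Lemma smul_sconstr p f : smul f (sconst p) = pm p f.
Proof.
apply/ffunP => S; rewrite !ffunE (bigD1 S) //= [X in _ + X]big1 ?addr0; last first.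
  move=> A /negbTE HA; rewrite big1 // => B /andP[_ /eqP HB].
  rewrite ffunE; case: eqP => [E|]; last by rewrite mulr0 scaler0.
  by move: HB HA; rewrite E setU0 => ->; rewrite eqxx.
rewrite (bigD1 set0) /= ?setI0 ?setU0 ?eqxx // big1 ?addr0.
  by rewrite ffunE eqxx ninv0r expr0 scale1r mulrC.
by move=> B /andP[_ /negbTE H]; rewrite ffunE H mulr0 scaler0.
Qed.
Lemma smul_yvr (f : salg) j S :
  smul f (yv K j) S = if j \in S then (-1) ^+ ninv (S :\ j) [set j] *: f (S :\ j) else 0.
Proof.
rewrite /smul ffunE.
under eq_bigr => A _.
  rewrite big_mkcond (bigD1 [set j]) //= big1 ?addr0; last first.
    by move=> B /negbTE HB; rewrite ffunE HB mulr0 scaler0; case: ifP.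
  rewrite ffunE eqxx mulr1 condE.
  over.
case: (boolP (j \in S)) => jS /=; last by rewrite big1.
rewrite (bigD1 (S :\ j)) //= eqxx big1 ?addr0 //.
by move=> A /negbTE ->.
Qed.

Lemma pmE p f S : pm p f S = p * f S. Proof. by rewrite ffunE. Qed.
Lemma yvE j S : yv K j S = if S == [set j] then 1 else 0. Proof. by rewrite ffunE. Qed.
Lemma sconstE p S : sconst p S = if S == set0 then p else 0. Proof. by rewrite ffunE. Qed.
Lemma xsub i j : xv K i - xv K j = sconst ('X_i - 'X_j).
Proof. by apply/ffunP => S; rewrite !ffunE; case: ifP; rewrite ?subr0. Qed.
Lemma sactE p f : sact p f = pm p f. Proof. exact: smul_sconstl. Qed.

Local Notation da := (da K).
Definition cc : P := 'X_2 - 'X_0.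
Lemma w1E : w1 K = pm da (yv K 0) - pm cc (yv K 1).
Proof. by rewrite /w1 /x2' /x2 /x1' /x1 !xsub !smul_sconstl. Qed.
Lemma w2E : w2 K = pm da (yv K 2) - pm cc (yv K 3).
Proof. by rewrite /w2 /x2' /x2 /x1' /x1 !xsub !smul_sconstl. Qed.
Lemma h2E : h2 K = pm da (smul (smul (yv K 0) (yv K 1)) (yv K 2)) - pm cc (smul (smul (yv K 0) (yv K 1)) (yv K 3)).
Proof. by rewrite /h2 /x2' /x2 /x1' /x1 !xsub !smul_sconstr smulBr !smul_pmr. Qed.
Lemma h3E : h3 K = pm da (smul (smul (yv K 2) (yv K 3)) (yv K 0)) - pm cc (smul (smul (yv K 2) (yv K 3)) (yv K 1)).
Proof. by rewrite /h3 /x2' /x2 /x1' /x1 !xsub !smul_sconstr smulBr !smul_pmr. Qed.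
Definition VV := pm da (yv K 2) - pm cc (yv K 3).
Lemma h4E : h4 K = pm da (smul VV (yv K 0)) - pm cc (smul VV (yv K 1)).
Proof. by rewrite /h4 /x2' /x2 /x1' /x1 !xsub !smul_sconstr smulBr !smul_pmr. Qed.
Lemma h1E : h1 K = smul (smul (smul (yv K 0) (yv K 1)) (yv K 2)) (yv K 3).
Proof. by []. Qed.

Lemma signZ (n : nat) (x : P) : (-1) ^+ n *: x = (if odd n then - x else x).
Proof. by rewrite -signr_odd; case: odd; rewrite ?expr0 ?expr1 ?scale1r ?scaleN1r. Qed.

Ltac ev := rewrite ?(smul_yvr, pmE, subfE, addfE, yvE, sconstE, mem_mk0, mem_mk1, mem_mk2, mem_mk3,
   setD1_mk0, setD1_mk1, setD1_mk2, setD1_mk3, set1_mk0, set1_mk1, set1_mk2, set1_mk3, set0_mk, mk_eq, ninv_mk).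
Lemma zerL (g : salg) : (forall t0 t1 t2 t3, g (mk t0 t1 t2 t3) = 0) -> g = 0.
Proof. by move=> H; apply/ffunP => S; rewrite zerofE (mkE S) H. Qed.
Ltac zer := apply: zerL; intros t0 t1 t2 t3; ev; revert t0 t1 t2 t3; do 4 case; rewrite /= ?signZ /=; ring.

Lemma h1w1 : smul (h1 K) (w1 K) = 0.
Proof. rewrite w1E smulBr !smul_pmr h1E; zer. Qed.
Lemma h1w2 : smul (h1 K) (w2 K) = 0.
Proof. rewrite w2E smulBr !smul_pmr h1E; zer. Qed.
Lemma h2w1 : smul (h2 K) (w1 K) = 0.
Proof. rewrite w1E smulBr !smul_pmr h2E; zer. Qed.
Lemma h2w2 : smul (h2 K) (w2 K) = 0.
Proof. rewrite w2E smulBr !smul_pmr h2E; zer. Qed.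
Lemma h3w1 : smul (h3 K) (w1 K) = 0.
Proof. rewrite w1E smulBr !smul_pmr h3E; zer. Qed.
Lemma h3w2 : smul (h3 K) (w2 K) = 0.
Proof. rewrite w2E smulBr !smul_pmr h3E; zer. Qed.
Lemma h4w1 : smul (h4 K) (w1 K) = 0.
Proof. rewrite w1E smulBr !smul_pmr h4E /VV; zer. Qed.
Lemma h4w2 : smul (h4 K) (w2 K) = 0.
Proof. rewrite w2E smulBr !smul_pmr h4E /VV; zer. Qed.
End S.

Lemma dbE (K : fieldType) : db K = 'X_0 - 'X_2. Proof. by []. Qed.
Lemma daE (K : fieldType) : da K = 'X_3 - 'X_1. Proof. by []. Qed.

Section T.
Variable K : fieldType.
Local Notation P := {mpoly K[4]}.
Local Notation salg := (salg K).
Local Notation da := (da K).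
Local Notation db := (db K).
Local Notation cc := (cc K).
Local Notation VV := (VV K).
Implicit Types (f g : salg) (p : P).
Lemma oppfE (g : salg) S : (- g) S = - g S. Proof. by rewrite ffunE. Qed.
Ltac ev := rewrite ?(smul_yvr, oppfE, pmE, subfE, addfE, yvE, sconstE, mem_mk0, mem_mk1, mem_mk2, mem_mk3,
   setD1_mk0, setD1_mk1, setD1_mk2, setD1_mk3, set1_mk0, set1_mk1, set1_mk2, set1_mk3, set0_mk, mk_eq, ninv_mk).
Lemma w1_mk f t0 t1 t2 t3 : smul f (w1 K) (mk t0 t1 t2 t3) =
  da * (if t0 then (-1) ^+ ninv (mk false t1 t2 t3) (mk true false false false) *: f (mk false t1 t2 t3) else 0)
  - cc * (if t1 then (-1) ^+ ninv (mk t0 false t2 t3) (mk false true false false) *: f (mk t0 false t2 t3) else 0).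
Proof.
by rewrite w1E smulBr !smul_pmr subfE !pmE !smul_yvr mem_mk0 mem_mk1 set1_mk0 set1_mk1 setD1_mk0 setD1_mk1.
Qed.
Lemma w2_mk f t0 t1 t2 t3 : smul f (w2 K) (mk t0 t1 t2 t3) =
  da * (if t2 then (-1) ^+ ninv (mk t0 t1 false t3) (mk false false true false) *: f (mk t0 t1 false t3) else 0)
  - cc * (if t3 then (-1) ^+ ninv (mk t0 t1 t2 false) (mk false false false true) *: f (mk t0 t1 t2 false) else 0).
Proof.
by rewrite w2E smulBr !smul_pmr subfE !pmE !smul_yvr mem_mk2 mem_mk3 set1_mk2 set1_mk3 setD1_mk2 setD1_mk3.
Qed.
Definition code (S : {set 'I_4}) : nat := (((0%R:'I_4) \in S) + 2 * ((1%R:'I_4) \in S) + 4 * ((2%R:'I_4) \in S) + 8 * ((3%R:'I_4) \in S))%N.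
Definition tab1 (k : nat) (v : P) : salg := [ffun S => if code S == k then v else 0].
Lemma tab1E k v t0 t1 t2 t3 : tab1 k v (mk t0 t1 t2 t3) = if (t0 + 2 * t1 + 4 * t2 + 8 * t3)%N == k then v else 0.
Proof. by rewrite ffunE /code mem_mk0 mem_mk1 mem_mk2 mem_mk3. Qed.
Lemma extL (g h : salg) : (forall t0 t1 t2 t3, g (mk t0 t1 t2 t3) = h (mk t0 t1 t2 t3)) -> g = h.
Proof. by move=> H; apply/ffunP => S; rewrite (mkE S) H. Qed.
Ltac tabt := apply: extL; intros t0 t1 t2 t3; rewrite ?addfE ?tab1E; ev; revert t0 t1 t2 t3; do 4 case;
  rewrite /= ?signZ /=; rewrite /cc; try rewrite dbE; try rewrite daE; ring.
Lemma h1T : h1 K = tab1 15 1.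
Proof. rewrite h1E. Time tabt. Qed.
Lemma h2T : h2 K = tab1 7 da + tab1 11 db.
Proof. rewrite h2E. Time tabt. Qed.
Lemma h3T : h3 K = tab1 13 da + tab1 14 db.
Proof. rewrite h3E. Time tabt. Qed.
Lemma h4T : h4 K = tab1 5 (- (da * da)) + tab1 9 (- (da * db)) + tab1 6 (- (db * da)) + tab1 10 (- (db * db)).
Proof. rewrite h4E /VV. Time tabt. Qed.
Lemma zeroE (u x y : P) : u != 0 -> y = 0 -> (y = u * x \/ y = - (u * x)) -> x = 0.
Proof. move=> un -> [] /esym/eqP; rewrite ?oppr_eq0 mulf_eq0 (negbTE un) => /eqP //. Qed.

Lemma dirR (f : salg) (H1 : smul f (w1 K) = 0) (H2 : smul f (w2 K) = 0) :
  exists c1 c2 c3 c4 : P, f = sact c1 (h1 K) + sact c2 (h2 K) + sact c3 (h3 K) + sact c4 (h4 K).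
Proof.
have dan := da_neq0 K. have dbn := db_neq0 K.
have ccn : cc != 0 by rewrite /cc -opprB oppr_eq0.
have := congr1 (fun g : salg => g (mk true false false false)) H1; rewrite w1_mk zerofE /= ?ninv_mk /= ?signZ /= => E1_1000.
have := congr1 (fun g : salg => g (mk true false false true)) H1; rewrite w1_mk zerofE /= ?ninv_mk /= ?signZ /= => E1_1001.
have := congr1 (fun g : salg => g (mk true false true false)) H1; rewrite w1_mk zerofE /= ?ninv_mk /= ?signZ /= => E1_1010.
have := congr1 (fun g : salg => g (mk true false true true)) H1; rewrite w1_mk zerofE /= ?ninv_mk /= ?signZ /= => E1_1011.
have := congr1 (fun g : salg => g (mk true true false true)) H1; rewrite w1_mk zerofE /= ?ninv_mk /= ?signZ /= => E1_1101.
have := congr1 (fun g : salg => g (mk true true true false)) H1; rewrite w1_mk zerofE /= ?ninv_mk /= ?signZ /= => E1_1110.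
have := congr1 (fun g : salg => g (mk true true true true)) H1; rewrite w1_mk zerofE /= ?ninv_mk /= ?signZ /= => E1_1111.
have := congr1 (fun g : salg => g (mk true false true false)) H2; rewrite w2_mk zerofE /= ?ninv_mk /= ?signZ /= => E2_1010.
have := congr1 (fun g : salg => g (mk false true true false)) H2; rewrite w2_mk zerofE /= ?ninv_mk /= ?signZ /= => E2_0110.
have := congr1 (fun g : salg => g (mk true true true false)) H2; rewrite w2_mk zerofE /= ?ninv_mk /= ?signZ /= => E2_1110.
have := congr1 (fun g : salg => g (mk true false true true)) H2; rewrite w2_mk zerofE /= ?ninv_mk /= ?signZ /= => E2_1011.
have := congr1 (fun g : salg => g (mk true true true true)) H2; rewrite w2_mk zerofE /= ?ninv_mk /= ?signZ /= => E2_1111.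
have Z0000 : f (mk false false false false) = 0 by apply: (zeroE dan E1_1000); first [left; rewrite /cc; try rewrite dbE; ring | right; rewrite /cc; try rewrite dbE; ring].
have Z0001 : f (mk false false false true) = 0 by apply: (zeroE dan E1_1001); first [left; rewrite /cc; try rewrite dbE; ring | right; rewrite /cc; try rewrite dbE; ring].
have Z0010 : f (mk false false true false) = 0 by apply: (zeroE dan E1_1010); first [left; rewrite /cc; try rewrite dbE; ring | right; rewrite /cc; try rewrite dbE; ring].
have Z0011 : f (mk false false true true) = 0 by apply: (zeroE dan E1_1011); first [left; rewrite /cc; try rewrite dbE; ring | right; rewrite /cc; try rewrite dbE; ring].
have Z1000 : f (mk true false false false) = 0 by apply: (zeroE dan E2_1010); first [left; rewrite /cc; try rewrite dbE; ring | right; rewrite /cc; try rewrite dbE; ring].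
have Z0100 : f (mk false true false false) = 0 by apply: (zeroE dan E2_0110); first [left; rewrite /cc; try rewrite dbE; ring | right; rewrite /cc; try rewrite dbE; ring].
have Z1100 : f (mk true true false false) = 0 by apply: (zeroE dan E2_1110); first [left; rewrite /cc; try rewrite dbE; ring | right; rewrite /cc; try rewrite dbE; ring].
have [g3 [G0111 G1011]] : exists p, f (mk false true true true) = db * p /\ f (mk true false true true) = da * p.
  by apply: DIV; apply/subr0_eq; first [rewrite -E1_1111 /cc; try rewrite dbE; ring | rewrite -[RHS]oppr0 -E1_1111 /cc; try rewrite dbE; ring].
have [g2 [G1101 G1110]] : exists p, f (mk true true false true) = db * p /\ f (mk true true true false) = da * p.
  by apply: DIV; apply/subr0_eq; first [rewrite -E2_1111 /cc; try rewrite dbE; ring | rewrite -[RHS]oppr0 -E2_1111 /cc; try rewrite dbE; ring].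
have [g [G0101 G1001]] : exists p, f (mk false true false true) = db * p /\ f (mk true false false true) = da * p.
  by apply: DIV; apply/subr0_eq; first [rewrite -E1_1101 /cc; try rewrite dbE; ring | rewrite -[RHS]oppr0 -E1_1101 /cc; try rewrite dbE; ring].
have [k [G0110 G1010]] : exists p, f (mk false true true false) = db * p /\ f (mk true false true false) = da * p.
  by apply: DIV; apply/subr0_eq; first [rewrite -E1_1110 /cc; try rewrite dbE; ring | rewrite -[RHS]oppr0 -E1_1110 /cc; try rewrite dbE; ring].
have : da * g = db * k.
  apply: (mulfI dan); apply/subr0_eq; rewrite G1001 G1010 in E2_1011; first [rewrite -E2_1011 /cc; try rewrite dbE; ring | rewrite -[RHS]oppr0 -E2_1011 /cc; try rewrite dbE; ring].
case/DIV => m [Gg Gk].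
exists (f (mk true true true true)), g2, g3, (- m).
rewrite h1T h2T h3T h4T; apply: extL => t0 t1 t2 t3.
rewrite ?(addfE, sactE, pmE, tab1E).
revert t0 t1 t2 t3; do 4 case; rewrite /=;
rewrite ?(Z0000, Z0001, Z0010, Z0011, Z1000, Z0100, Z1100, G0111, G1011, G1101, G1110, G0101, G1001, G0110, G1010, Gg, Gk); ring.
Qed.
End T.

Lemma smul4 (K : fieldType) (f1 f2 f3 f4 g : salg K) :
  smul (f1 + f2 + f3 + f4) g = smul f1 g + smul f2 g + smul f3 g + smul f4 g.
Proof. by rewrite (smulDl (f1 + f2 + f3)) (smulDl (f1 + f2)) smulDl. Qed.



Lemma fin4 (K : fieldType) (c1 c2 c3 c4 : {mpoly K[4]}) (g1 g2 g3 g4 w : salg K) :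
  smul g1 w = 0 -> smul g2 w = 0 -> smul g3 w = 0 -> smul g4 w = 0 ->
  smul (sact c1 g1 + sact c2 g2 + sact c3 g3 + sact c4 g4) w = 0.
Proof.
move=> E1 E2 E3 E4; rewrite smul4 !sactE !smul_pml E1 E2 E3 E4 !pm0 !addr0 //.
Qed.

Unset Implicit Arguments.

Theorem proposition1 (K : fieldType)
  (K_infinite : forall s : seq K, exists a : K, a \notin s)
  (K_char : (2%:R : K) != 0) :
  forall f : salg K,
    inJ f <->
    exists c1 c2 c3 c4 : {mpoly K[4]},
      f = sact c1 (h1 K) + sact c2 (h2 K) + sact c3 (h3 K) + sact c4 (h4 K).
Proof.
move=> f; split => [[H1 H2]|[c1 [c2 [c3 [c4 ->]]]]]; first exact: dirR.
split; apply: fin4.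
- exact: h1w1.
- exact: h2w1.
- exact: h3w1.
- exact: h4w1.
- exact: h1w2.
- exact: h2w2.
- exact: h3w2.
- exact: h4w2.
Qed.
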